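(* In the multispectral 2D Toda setting described in the context, let $Z_1(t)$ and $Z_2(t)$ be semi-infinite matrices such that $Z_1(t)\big(W^{(0)}_1(t_1)\big)^{-1}$ is block strictly lower triangular, $Z_2(t)\big(W^{(0)}_2(t_2)\big)^{-\top}$ is block upper triangular, and $Z_1(t)G=Z_2(t)$. Then $Z_1(t)=0$ and $Z_2(t)=0$.
   Context: Multi-indices ordered by graded lexicographic order; semi-infinite matrices partitioned in blocks indexed by $[k]=\{\boldsymbol\alpha\in\mathbb Z_+^D:|\boldsymbol\alpha|=k\}$. Spectral matrices $(\Lambda_a)_{\boldsymbol\alpha,\boldsymbol\beta}=\delta_{\boldsymbol\alpha+\boldsymbol e_a,\boldsymbol\beta}$, $\boldsymbol\Lambda^{\boldsymbol\alpha}=\Lambda_1^{\alpha_1}\cdots\Lambda_D^{\alpha_D}$. $G$ is a semi-infinite complex matrix; times $t_i=(t_{i,\boldsymbol\alpha})_{\boldsymbol\alpha\in\mathbb Z_+^D}$, $i=1,2$; $W^{(0)}_i(t_i)=\exp\big(\sum_{\boldsymbol\alpha}t_{i,\boldsymbol\alpha}\boldsymbol\Lambda^{\boldsymbol\alpha}\big)$; $G(t)=W_1^{(0)}(t_1)G\big(W_2^{(0)}(t_2)\big)^{-\top}$ is assumed to admit a block Gauss–Borel factorization $G(t)=S_1(t)^{-1}H(t)S_2(t)^{-\top}$ with $S_i$ block lower unitriangular and $H$ block diagonal. *)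

(* Defs.v *)
From HB Require Import structures.
From mathcomp Require Import all_boot all_order all_algebra.
From mathcomp Require Import complex.
From mathcomp Require Import all_classical all_reals all_analysis.
Set Implicit Arguments. Unset Strict Implicit. Unset Printing Implicit Defensive.
Import Order.TTheory GRing.Theory Num.Theory.
Import numFieldNormedType.Exports.
Local Open Scope ring_scope.
Local Open Scope classical_set_scope.

(* The complex numbers C = R[i], R a real-number type, viewed as a numFieldType
   (norm = modulus, hence the usual topology of C). *)
Definition Cx (R : realType) : numFieldType := R[i].

Definition mi (D : nat) := {ffun 'I_D -> nat}.

Definition mdeg D (a : mi D) : nat := (\sum_(i < D) a i)%N.

Definition madd D (a b : mi D) : mi D := [ffun i => (a i + b i)%N].

(* Semi-infinite complex matrices, entries indexed by pairs of multi-indices;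
   the block [k] consists of the multi-indices of degree k. *)
Definition smat (R : realType) (D : nat) := mi D -> mi D -> Cx R.

(* Finite partial sum over all multi-indices delta with |delta| <= N
   (i.e. over the blocks [0], ..., [N]). *)
Definition bsum (R : realType) D (N : nat) (F : mi D -> Cx R) : Cx R :=
  \sum_(f : {ffun 'I_D -> 'I_N.+1} | (\sum_(i < D) (f i : nat) <= N)%N)
     F [ffun i => (f i : nat)].

Definition blocksum (R : realType) D (k : nat) (F : mi D -> Cx R) : Cx R :=
  \sum_(f : {ffun 'I_D -> 'I_k.+1} | (\sum_(i < D) (f i : nat) == k)%N)
     F [ffun i => (f i : nat)].

(* Matrix product of semi-infinite matrices: (A B)_{b,c} = sum_d A_{b,d} B_{d,c},
   the series being summed block by block (partial sums over |d| <= N).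
   [mmul_to A B P] : the product A B exists (all these series converge) and equals P. *)
Definition mmul_to (R : realType) D (A B P : smat R D) : Prop :=
  forall b c, (fun N => bsum N (fun d => A b d * B d c)) @ \oo --> P b c.

Definition mmul (R : realType) D (A B : smat R D) : smat R D :=
  fun b c => limn (fun N => bsum N (fun d => A b d * B d c)).

Definition mtr (R : realType) D (A : smat R D) : smat R D := fun b c => A c b.
Definition sone (R : realType) D : smat R D := fun b c => (b == c)%:R.
Definition szero (R : realType) D : smat R D := fun _ _ => 0.
Arguments sone R D : clear implicits.
Arguments szero R D : clear implicits.
Definition mopp (R : realType) D (A : smat R D) : smat R D := fun b c => - A b c.

Fixpoint mpow (R : realType) D (A : smat R D) (n : nat) : smat R D :=
  if n is n'.+1 then mmul (mpow A n') A else sone R D.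

Definition mexp (R : realType) D (A : smat R D) : smat R D :=
  fun b c => limn (fun n => \sum_(k < n) mpow A k b c / (k`!)%:R).

(* Spectral matrices: (Lambda^alpha)_{b,c} = delta_{b + alpha, c}
   (= Lambda_1^{alpha_1} ... Lambda_D^{alpha_D}, (Lambda_a)_{b,c} = delta_{b+e_a,c}). *)
Definition Lam (R : realType) D (a : mi D) : smat R D :=
  fun b c => (madd b a == c)%:R.

Definition tLam (R : realType) D (t : mi D -> Cx R) : smat R D :=
  fun b c => limn (fun N => bsum N (fun a => t a * Lam R a b c)).

Definition W0 (R : realType) D (t : mi D -> Cx R) : smat R D := mexp (tLam t).
Definition W0inv (R : realType) D (t : mi D -> Cx R) : smat R D :=
  mexp (mopp (tLam t)).

Definition block_lower (R : realType) D (A : smat R D) : Prop :=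
  forall b c, (mdeg b < mdeg c)%N -> A b c = 0.
Definition block_strictly_lower (R : realType) D (A : smat R D) : Prop :=
  forall b c, (mdeg b <= mdeg c)%N -> A b c = 0.
Definition block_upper (R : realType) D (A : smat R D) : Prop :=
  forall b c, (mdeg c < mdeg b)%N -> A b c = 0.
Definition block_diagonal (R : realType) D (A : smat R D) : Prop :=
  forall b c, mdeg b != mdeg c -> A b c = 0.
Definition block_lower_unitri (R : realType) D (A : smat R D) : Prop :=
  block_lower A /\ forall b c, mdeg b = mdeg c -> A b c = (b == c)%:R.

Definition block_diag_invertible (R : realType) D (H : smat R D) : Prop :=
  block_diagonal H /\
  exists K : smat R D, block_diagonal K /\
    (forall b c, mdeg b = mdeg c ->
       blocksum (mdeg b) (fun d => H b d * K d c) = (b == c)%:R) /\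
    (forall b c, mdeg b = mdeg c ->
       blocksum (mdeg b) (fun d => K b d * H d c) = (b == c)%:R).

(* Main.v *)
Require Import Defs.
From HB Require Import structures.
From mathcomp Require Import all_boot all_order all_algebra.
From mathcomp Require Import complex.
From mathcomp Require Import all_classical all_reals all_analysis.
Set Implicit Arguments. Unset Strict Implicit. Unset Printing Implicit Defensive.
Import Order.TTheory GRing.Theory Num.Theory.
Import numFieldNormedType.Exports.
Local Open Scope ring_scope.
Local Open Scope classical_set_scope.
From mathcomp Require Import ring zify.

Section BS.
Variables (R : realType) (D : nat).
Local Notation C := (Cx R).

Definition cst (K : nat) (f : {ffun 'I_D -> 'I_K.+1}) : mi D := [ffun i => (f i : nat)].

Lemma mdeg_cst K (f : {ffun 'I_D -> 'I_K.+1}) :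
  mdeg (cst f) = (\sum_(i < D) (f i : nat))%N.
Proof. by rewrite /mdeg; apply: eq_bigr => i _; rewrite ffunE. Qed.

Definition gsum K (P : pred (mi D)) (F : mi D -> C) : C :=
  \sum_(f : {ffun 'I_D -> 'I_K.+1} | P (cst f)) F (cst f).

Lemma bsumE N (F : mi D -> C) : bsum N F = gsum N (fun d => mdeg d <= N)%N F.
Proof. by rewrite /bsum /gsum; apply: eq_bigl => f; rewrite mdeg_cst. Qed.

Lemma blocksumE k (F : mi D -> C) : blocksum k F = gsum k (fun d => mdeg d == k) F.
Proof. by rewrite /blocksum /gsum; apply: eq_bigl => f; rewrite mdeg_cst. Qed.

Lemma le_mdeg (d : mi D) i : (d i <= mdeg d)%N.
Proof. by rewrite /mdeg (bigD1 i) //= leq_addr. Qed.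

Lemma gsum_widen N K (P : pred (mi D)) (F : mi D -> C) : (N <= K)%N -> (forall d, P d -> mdeg d <= N)%N ->
  gsum K P F = gsum N P F.
Proof.
move=> NK HP; rewrite /gsum.
pose h (f : {ffun 'I_D -> 'I_N.+1}) : {ffun 'I_D -> 'I_K.+1} :=
  [ffun i => widen_ord (NK : (N < K.+1)%N) (f i)].
pose h' (g : {ffun 'I_D -> 'I_K.+1}) : {ffun 'I_D -> 'I_N.+1} :=
  [ffun i => inord (g i)].
rewrite (reindex_onto h h'); last first.
  move=> g Pg; apply/ffunP => i; rewrite !ffunE; apply/val_inj => /=.
  rewrite inordK // ltnS; apply: leq_trans (HP _ Pg).
  by have := le_mdeg (cst g) i; rewrite ffunE.
have ch : forall f, cst (h f) = cst f.
  by move=> f; apply/ffunP => i; rewrite !ffunE.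
apply: eq_big => f; last by move=> _; rewrite ch.
rewrite ch; case: (P (cst f)) => //=; apply/eqP/ffunP => i; rewrite !ffunE.
by apply/val_inj => /=; rewrite inordK.
Qed.

Lemma bsum_supp N K (F : mi D -> C) : (N <= K)%N -> (forall d, (N < mdeg d)%N -> F d = 0) ->
  bsum K F = bsum N F.
Proof.
move=> NK HF; rewrite !bsumE -(@gsum_widen N K) //.
rewrite /gsum !(big_mkcond (fun f => (mdeg (cst f) <= _)%N)).
apply: eq_bigr => f _; have [h1|h1] := leqP (mdeg (cst f)) N.
  by rewrite (leq_trans h1 NK).
by rewrite HF // if_same.
Qed.

Lemma bsum_cvg M (F : mi D -> C) : (forall d, (M < mdeg d)%N -> F d = 0) ->
  (fun N => bsum N F) @ \oo --> bsum M F.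
Proof.
move=> HF; apply: cvg_near_cst; exists M => // N /= MN; exact: bsum_supp.
Qed.

Lemma bsum_lim M (F : mi D -> C) : (forall d, (M < mdeg d)%N -> F d = 0) ->
  limn (fun N => bsum N F) = bsum M F.
Proof. by move=> HF; apply: cvg_lim => //; apply: bsum_cvg. Qed.

Lemma bsum_delta N b (F : mi D -> C) : (mdeg b <= N)%N ->
  bsum N (fun d => (b == d)%:R * F d) = F b.
Proof.
move=> bN; rewrite bsumE /gsum.
pose f0 : {ffun 'I_D -> 'I_N.+1} := [ffun i => inord (b i)].
have cf0 : cst f0 = b.
  apply/ffunP => i; rewrite !ffunE inordK // ltnS; exact: leq_trans (le_mdeg b i) bN.
rewrite (bigD1 f0) /=; last by rewrite cf0.
rewrite cf0 eqxx mul1r big1 ?addr0 // => f /andP[_ nf].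
have -> : (b == cst f) = false.
  apply/negbTE; apply: contra nf => /eqP bf; apply/eqP/ffunP => i.
  by rewrite /f0 ffunE bf ffunE; apply/val_inj; rewrite /= inordK.
by rewrite mul0r.
Qed.

Lemma bsumD N (F G : mi D -> C) : bsum N (fun d => F d + G d) = bsum N F + bsum N G.
Proof. exact: big_split. Qed.
Lemma bsumZ N (a : C) (F : mi D -> C) : bsum N (fun d => a * F d) = a * bsum N F.
Proof. by rewrite /bsum mulr_sumr. Qed.
Lemma bsumZr N (a : C) (F : mi D -> C) : bsum N (fun d => F d * a) = bsum N F * a.
Proof. by rewrite /bsum mulr_suml. Qed.
Lemma bsumN N (F : mi D -> C) : bsum N (fun d => - F d) = - bsum N F.
Proof. by rewrite /bsum sumrN. Qed.
Lemma bsum0 N : bsum N (fun _ : mi D => 0 : C) = 0.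
Proof. by rewrite /bsum big1. Qed.
Lemma bsum_exch N K (F : mi D -> mi D -> C) :
  bsum N (fun d => bsum K (fun e => F d e)) = bsum K (fun e => bsum N (fun d => F d e)).
Proof. exact: exchange_big. Qed.
Lemma bsum_sum N m (F : 'I_m -> mi D -> C) :
  bsum N (fun d => \sum_(j < m) F j d) = \sum_(j < m) bsum N (F j).
Proof. exact: exchange_big. Qed.
Lemma bsum_ext N (F G : mi D -> C) : (forall d, (mdeg d <= N)%N -> F d = G d) -> bsum N F = bsum N G.
Proof.
move=> H; apply: eq_bigr => f; rewrite -mdeg_cst; exact: H.
Qed.
Lemma bsum_eq0 N (F : mi D -> C) : (forall d, (mdeg d <= N)%N -> F d = 0) -> bsum N F = 0.
Proof. by move=> H; rewrite (bsum_ext H) bsum0. Qed.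

Lemma bsum_deltar N c (F : mi D -> C) : (mdeg c <= N)%N ->
  bsum N (fun d => F d * (d == c)%:R) = F c.
Proof.
move=> cN; rewrite -(bsum_delta F cN); apply: bsum_ext => d _.
by rewrite mulrC eq_sym.
Qed.

End BS.

Lemma my_cvg_big (K : numFieldType) (I : Type) (r : seq I) (P : pred I)
  (u : I -> nat -> K) (l : I -> K) :
  (forall i, P i -> u i @ \oo --> l i) ->
  (fun n => \sum_(i <- r | P i) u i n) @ \oo --> \sum_(i <- r | P i) l i.
Proof.
elim: r => [|x r IH] H.
  rewrite big_nil; have -> : (fun n => \sum_(i <- [::] | P i) u i n) = fun _ => 0.
    by apply/funext => n; rewrite big_nil.
  exact: cvg_cst.
rewrite big_cons; have -> : (fun n => \sum_(i <- x :: r | P i) u i n) =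
   (fun n => (if P x then u x n else 0) + \sum_(i <- r | P i) u i n).
  by apply/funext => n; rewrite big_cons; case: (P x); rewrite ?add0r.
have -> : (if P x then l x + \sum_(i <- r | P i) l i else \sum_(i <- r | P i) l i) =
   (if P x then l x else 0) + \sum_(i <- r | P i) l i.
  by case: (P x); rewrite ?add0r.
apply: cvgD; last exact: IH.
case Px: (P x); first exact: H.
exact: cvg_cst.
Qed.

Lemma cvg_bsum (R : realType) D K (u : mi D -> nat -> Cx R) l :
  (forall d, u d @ \oo --> l d) ->
  (fun n => bsum K (fun d => u d n)) @ \oo --> bsum K l.
Proof. by move=> H; apply: my_cvg_big => i _; apply: H. Qed.

Section Core.
Variables (R : realType) (D : nat).
Local Notation C := (Cx R).
Local Notation sm := (smat R D).
Implicit Types (b c d e f : mi D).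

Lemma lim_eq1 (u : nat -> C) (a : C) : u @ \oo --> a -> lim (u @ \oo) = a.
Proof. move=> ha. apply: cvg_lim => //. Qed.

Lemma lim_eq (u v : nat -> C) (a a' : C) : u @ \oo --> a -> v @ \oo --> a' -> u = v -> a = a'.
Proof.
move=> ha hb uv; subst v.
by rewrite -(lim_eq1 ha) -(lim_eq1 hb).
Qed.

Lemma bsum_eq N (F G : mi D -> C) : (forall d, F d = G d) -> bsum N F = bsum N G.
Proof. by move=> H; apply: bsum_ext => d _; apply: H. Qed.
Lemma blocksum_eq k (F G : mi D -> C) : (forall d, F d = G d) -> blocksum k F = blocksum k G.
Proof. by move=> H; apply: eq_bigr => f _; apply: H. Qed.

Lemma mmul_to_fin (Z V P : sm) b c M : mmul_to Z V P ->
  (forall d, (M < mdeg d)%N -> Z b d * V d c = 0) ->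
  P b c = bsum M (fun d => Z b d * V d c).
Proof.
move=> h H; apply: (lim_eq (h b c) (bsum_cvg H)) => //.
Qed.

Lemma mmul_fin (Z V : sm) b c M :
  (forall d, (M < mdeg d)%N -> Z b d * V d c = 0) ->
  mmul Z V b c = bsum M (fun d => Z b d * V d c).
Proof. by move=> H; rewrite /mmul (bsum_lim H). Qed.

Lemma bsum_supp2 N K (F : mi D -> C) :
  (forall d, (N < mdeg d)%N -> F d = 0) -> (forall d, (K < mdeg d)%N -> F d = 0) ->
  bsum N F = bsum K F.
Proof.
move=> HN HK; have [NK|KN] := leqP N K.
  by rewrite (bsum_supp NK HN).
by rewrite (bsum_supp (ltnW KN) HK).
Qed.

Lemma assoc_cvg (Y A B Z P : sm) b c K :
  (forall d, Y b d = bsum K (fun e => A b e * B e d)) -> mmul_to B Z P ->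
  (fun N => bsum N (fun d => Y b d * Z d c)) @ \oo -->
     bsum K (fun e => A b e * P e c).
Proof.
move=> HY hP.
have -> : (fun N => bsum N (fun d => Y b d * Z d c)) =
   (fun N => bsum K (fun e => A b e * bsum N (fun d => B e d * Z d c))).
  apply/funext => N.
  under bsum_eq do rewrite HY -bsumZr.
  rewrite bsum_exch; apply: bsum_ext => e _; rewrite -bsumZ.
  by apply: bsum_ext => d _; rewrite mulrA.
apply: cvg_bsum => e; apply: cvgMl_tmp; exact: hP.
Qed.

Lemma blocksum_exch k N (F : mi D -> mi D -> C) :
  blocksum k (fun c => bsum N (fun f => F c f)) =
  bsum N (fun f => blocksum k (fun c => F c f)).
Proof. exact: exchange_big. Qed.

Lemma blocksumZr k (a : C) (F : mi D -> C) :
  blocksum k (fun c => F c * a) = blocksum k F * a.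
Proof. by rewrite /blocksum mulr_suml. Qed.
Lemma blocksumZ k (a : C) (F : mi D -> C) :
  blocksum k (fun c => a * F c) = a * blocksum k F.
Proof. by rewrite /blocksum mulr_sumr. Qed.

Lemma blocksum_ext k (F G : mi D -> C) :
  (forall d, mdeg d = k -> F d = G d) -> blocksum k F = blocksum k G.
Proof.
move=> H; rewrite !blocksumE; apply: eq_bigr => f /eqP h; exact: H.
Qed.

Lemma blocksum_eq0 k (F : mi D -> C) :
  (forall d, mdeg d = k -> F d = 0) -> blocksum k F = 0.
Proof.
move=> H; rewrite (blocksum_ext H) /blocksum big1 //.
Qed.

Lemma core (V W V2 G WG Gt S1 S2 S1inv S2inv H Z1 Z2 : sm) :
  (forall f e, (mdeg e < mdeg f)%N -> V f e = 0) ->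
  (forall f e, (mdeg e < mdeg f)%N -> W f e = 0) ->
  (forall b c, bsum (mdeg c) (fun e => V b e * W e c) = (b == c)%:R) ->
  mmul_to W G WG ->
  mmul_to WG (mtr V2) Gt ->
  block_lower_unitri S1 -> block_lower_unitri S2 ->
  block_lower S1inv -> mmul_to S1 S1inv (sone R D) -> mmul_to S1inv S1 (sone R D) ->
  block_lower S2inv -> mmul_to S2 S2inv (sone R D) -> mmul_to S2inv S2 (sone R D) ->
  block_diag_invertible H ->
  Gt = mmul (mmul S1inv H) (mtr S2inv) ->
  (exists L, mmul_to Z1 V L /\ block_strictly_lower L) ->
  (exists U, mmul_to Z2 (mtr V2) U /\ block_upper U) ->
  mmul_to Z1 G Z2 ->
  Z1 = szero R D /\ Z2 = szero R D.
Proof.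
move=> Vup Wup VW hWG hGt [S1l _] [S2l _] S1il _ hS1iS1 S2il hS2S2i _
  [Hd [K [Kd [HK _]]]] Gtdef [L [hL Lsl]] [U [hU Uup]] hZ.
have Lf b c : L b c = bsum (mdeg c) (fun d => Z1 b d * V d c).
  by apply: mmul_to_fin hL _ => d dc; rewrite Vup ?mulr0.
have Z1f b d : Z1 b d = bsum (mdeg b) (fun e => L b e * W e d).
  have -> : Z1 b d = bsum (mdeg d) (fun e => L b e * W e d).
    transitivity (bsum (mdeg d) (fun f => Z1 b f * (f == d)%:R)).
      by rewrite bsum_deltar.
    transitivity (bsum (mdeg d) (fun f => Z1 b f *
       bsum (mdeg d) (fun e => V f e * W e d))).
      by apply: bsum_ext => f _; rewrite VW.
    transitivity (bsum (mdeg d) (fun e => bsum (mdeg d) (fun f => Z1 b f * V f e) * W e d)).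
      under bsum_eq do rewrite -bsumZ.
      rewrite bsum_exch; apply: bsum_ext => e _; rewrite -bsumZr.
      by apply: bsum_ext => f _; rewrite mulrA.
    apply: bsum_ext => e ed; rewrite Lf; congr (_ * _).
    apply: bsum_supp => // f ef; by rewrite Vup ?mulr0.
  apply: bsum_supp2 => e he.
    by rewrite Wup ?mulr0.
  by rewrite Lsl ?mul0r // ltnW.
have Z2f b c : Z2 b c = bsum (mdeg b) (fun e => L b e * WG e c).
  by apply: (lim_eq (hZ b c) (assoc_cvg (c:=c) (Z1f b) hWG)).
have Uf b c : U b c = bsum (mdeg b) (fun e => L b e * Gt e c).
  by apply: (lim_eq (hU b c) (assoc_cvg (c:=c) (Z2f b) hGt)).
pose M := mmul S1inv H.
have Mf b e : M b e = bsum (mdeg b) (fun d => S1inv b d * H d e).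
  by apply: mmul_fin => d bd; rewrite S1il ?mul0r.
have M0 b e : (mdeg b < mdeg e)%N -> M b e = 0.
  move=> be; rewrite Mf; apply: bsum_eq0 => d db; rewrite Hd ?mulr0 //.
  by rewrite neq_ltn (leq_ltn_trans db be).
have Gtf e c : Gt e c = bsum (mdeg e) (fun f => M e f * S2inv c f).
  by rewrite Gtdef -/M; apply: mmul_fin => f ef; rewrite M0 ?mul0r.
have S2S2i c f : bsum (mdeg c) (fun d => S2 c d * S2inv d f) = (c == f)%:R.
  by symmetry; apply: mmul_to_fin hS2S2i _ => d cd; rewrite S2l ?mul0r.
pose LM b c := bsum (mdeg b) (fun e => L b e * M e c).
have GtS2 e c : bsum (mdeg c) (fun d => Gt e d * S2 c d) = M e c.
  transitivity (bsum (mdeg e) (fun f => M e f * (c == f)%:R)).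
    under bsum_eq do rewrite Gtf -bsumZr.
    rewrite bsum_exch; apply: bsum_ext => f _; rewrite -S2S2i -bsumZ.
    by apply: bsum_ext => d _; rewrite mulrAC -mulrA.
  have [ce|ec] := leqP (mdeg c) (mdeg e).
    by rewrite -[RHS](bsum_delta (fun f => M e f) ce); apply: bsum_ext => f _; rewrite mulrC.
  rewrite M0 // bsum_eq0 // => f fe.
  case: eqP => [cf|_]; last by rewrite mulr0.
  by move: fe; rewrite -cf leqNgt ec.
have LMf b c : bsum (mdeg c) (fun d => U b d * S2 c d) = LM b c.
  under bsum_eq do rewrite Uf -bsumZr.
  rewrite bsum_exch; apply: bsum_ext => e _; rewrite -GtS2 -bsumZ.
  by apply: bsum_ext => d _; rewrite mulrA.
have LM0 b c : LM b c = 0.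
  have [cb|bc] := ltnP (mdeg c) (mdeg b).
    rewrite -LMf; apply: bsum_eq0 => d dc; rewrite Uup ?mul0r //.
    exact: leq_ltn_trans dc cb.
  apply: bsum_eq0 => e eb; have [be|eb'] := leqP (mdeg b) (mdeg e).
    by rewrite Lsl ?mul0r.
  by rewrite M0 ?mulr0 // (leq_trans eb').
pose x b d := bsum (mdeg b) (fun e => L b e * S1inv e d).
have LMx b c : LM b c = bsum (mdeg b) (fun f => x b f * H f c).
  transitivity (bsum (mdeg b) (fun e => L b e * bsum (mdeg b) (fun f => S1inv e f * H f c))).
    apply: bsum_ext => e eb; rewrite Mf; congr (_ * _).
    by symmetry; apply: bsum_supp => // f ef; rewrite S1il ?mul0r.
  under bsum_eq do rewrite -bsumZ.
  rewrite bsum_exch; apply: bsum_ext => f _; rewrite -bsumZr.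
  by apply: bsum_ext => e _; rewrite mulrA.
have x0 b d : x b d = 0.
  have [db|bd] := leqP (mdeg d) (mdeg b); last first.
    by apply: bsum_eq0 => e eb; rewrite S1il ?mulr0 // (leq_ltn_trans eb bd).
  transitivity (blocksum (mdeg d) (fun c => LM b c * K c d)); last first.
    by apply: blocksum_eq0 => c _; rewrite LM0 mul0r.
  under [RHS]blocksum_eq do rewrite LMx -bsumZr.
  rewrite blocksum_exch -(bsum_deltar (x b) db); apply: bsum_ext => f _.
  have -> : (f == d)%:R = blocksum (mdeg d) (fun c => H f c * K c d).
    have [fd|fd] := eqVneq (mdeg f) (mdeg d).
      by rewrite -fd HK.
    rewrite blocksum_eq0; last by move=> c cd; rewrite Hd ?mul0r // cd.
    by have -> : (f == d) = false by apply: contraNF fd => /eqP ->.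
  rewrite -blocksumZ; apply: blocksum_ext => c _; by rewrite mulrA.
have L0 b c : L b c = 0.
  have [bc|cb] := leqP (mdeg b) (mdeg c); first by rewrite Lsl.
  have S1iS1 e : bsum (mdeg e) (fun d => S1inv e d * S1 d c) = (e == c)%:R.
    by symmetry; apply: mmul_to_fin hS1iS1 _ => d ed; rewrite S1il ?mul0r.
  transitivity (bsum (mdeg b) (fun d => x b d * S1 d c)); last first.
    by apply: bsum_eq0 => d _; rewrite x0 mul0r.
  rewrite -(bsum_deltar (L b) (ltnW cb)).
  transitivity (bsum (mdeg b) (fun e => L b e * bsum (mdeg b) (fun d => S1inv e d * S1 d c))).
    apply: bsum_ext => e eb; rewrite -S1iS1; congr (_ * _); symmetry.
    by apply: bsum_supp => // d ed; rewrite S1il ?mul0r.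
  under bsum_eq do rewrite -bsumZ.
  rewrite bsum_exch; apply: bsum_ext => d _; rewrite -bsumZr.
  by apply: bsum_ext => e _; rewrite mulrA.
split; apply/funext => b; apply/funext => c.
  by rewrite Z1f; apply: bsum_eq0 => e _; rewrite L0 mul0r.
by rewrite Z2f; apply: bsum_eq0 => e _; rewrite L0 mul0r.
Qed.

End Core.

Definition en (K : numFieldType) (x : K) (n : nat) : K :=
  \sum_(i < n) x ^+ i / (i`!)%:R.
Definition rn (K : numFieldType) (x y : K) (n : nat) : K :=
  \sum_(i < n) \sum_(j < n | (n <= i + j)%N) (x ^+ i / (i`!)%:R) * (y ^+ j / (j`!)%:R).

Lemma fact_neq0 (K : numFieldType) n : (n`!%:R : K) != 0.
Proof. by rewrite pnatr_eq0 -lt0n fact_gt0. Qed.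

Lemma binom_fact (K : numFieldType) (x y : K) s :
  \sum_(i < s.+1) (x ^+ i / (i`!)%:R) * (y ^+ (s - i) / ((s - i)`!)%:R) =
  (x + y) ^+ s / (s`!)%:R.
Proof.
rewrite addrC exprDn mulr_suml; apply: eq_bigr => i _.
have hb := bin_fact (ltnSE (ltn_ord i)).
rewrite -mulr_natr -hb !natrM.
have h1 := fact_neq0 K i; have h2 := fact_neq0 K (s - i).
have h3 : ('C(s, i)%:R : K) != 0 by rewrite pnatr_eq0 -lt0n bin_gt0 -ltnS.
field.
by rewrite h1 h2 h3.
Qed.

Lemma triangle (K : numFieldType) n (F : nat -> nat -> K) :
  \sum_(i < n) \sum_(j < n | (i + j < n)%N) F i j =
  \sum_(s < n) \sum_(i < s.+1) F i (s - i)%N.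
Proof.
transitivity (\sum_(i < n) \sum_(s < n) (if (i <= s)%N then F i (s - i)%N else 0)).
  apply: eq_bigr => i _.
  rewrite -big_mkcond /=.
  transitivity (\sum_(0 <= j < n - i) F i j).
    rewrite big_mkord (@big_ord_widen_cond _ _ _ (n - i) n xpredT (fun j => F i j)) ?leq_subr //.
    by apply: eq_bigl => j /=; rewrite ltn_subRL.
  rewrite -(big_geq_mkord i n xpredT (fun s => F i (s - i)%N)).
  have := big_addn 0 n i xpredT (fun s => F i (s - i)%N); rewrite add0n => ->.
  by apply: eq_bigr => j _; rewrite addnK.
rewrite exchange_big /=; apply: eq_bigr => s _.
rewrite -big_mkcond /=.
rewrite (@big_ord_widen_cond _ _ _ s.+1 n xpredT (fun i => F i (s - i)%N)) //.
Qed.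

Lemma en_mul (K : numFieldType) (x y : K) n :
  en x n * en y n = en (x + y) n + rn x y n.
Proof.
rewrite /en /rn mulr_suml.
transitivity (\sum_(i < n) \sum_(j < n) (x ^+ i / (i`!)%:R) * (y ^+ j / (j`!)%:R)).
  by apply: eq_bigr => i _; rewrite mulr_sumr.
rewrite (eq_bigr (fun i : 'I_n => \sum_(j < n | (i + j < n)%N) (x ^+ i / (i`!)%:R) * (y ^+ j / (j`!)%:R)
   + \sum_(j < n | (n <= i + j)%N) (x ^+ i / (i`!)%:R) * (y ^+ j / (j`!)%:R))); last first.
  move=> i _; rewrite (bigID (fun j : 'I_n => (i + j < n)%N)) /=; congr (_ + _).
  by apply: eq_bigl => j; rewrite -leqNgt.
rewrite big_split /=; congr (_ + _).
rewrite (triangle n (fun i j => (x ^+ i / (i`!)%:R) * (y ^+ j / (j`!)%:R))).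
by apply: eq_bigr => s _; rewrite binom_fact.
Qed.

Lemma rn_norm (K : numFieldType) (x y : K) n :
  `|rn x y n| <= rn `|x| `|y| n.
Proof.
rewrite /rn; apply: le_trans (ler_norm_sum _ _ _) _; apply: ler_sum => i _.
apply: le_trans (ler_norm_sum _ _ _) _; apply: ler_sum => j _.
by rewrite normrM !normf_div !normrX !normr_nat.
Qed.

Lemma rnE (K : numFieldType) (x y : K) n :
  rn x y n = en x n * en y n - en (x + y) n.
Proof. by rewrite en_mul [en (x + y) n + _]addrC addrK. Qed.

Lemma en0 (K : numFieldType) n : en (0 : K) n.+1 = 1.
Proof.
rewrite /en big_ord_recl /= expr0 divr1 big1 ?addr0 // => i _.
by rewrite expr0n /= mul0r.
Qed.

Section ScalarExp.
Variable R : realType.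
Local Open Scope complex_scope.
Local Notation C := (Cx R).

Lemma Re_mulr (w : C) (r : R) : complex.Re (w * (r%:C : C)) = complex.Re w * r.
Proof. by case: w => a b; simpc. Qed.

Lemma norm_realC (x : R) : `|(x%:C : C)| = (`|x|%:C : C).
Proof. by rewrite normc_def /= expr0n addr0 sqrtr_sqr. Qed.

Lemma cvgC (u : nat -> R) (l : R) : u @ \oo --> l ->
  (fun n => ((u n)%:C : C)) @ \oo --> (l%:C : C).
Proof.
move/cvgrPdist_lt => H; apply/cvgrPdist_lt => e e0.
move: (e0); rewrite ltcE /= => /andP[/eqP Ie Re0].
apply: filterS (H _ Re0) => n hn.
rewrite -rmorphB norm_realC.
have eqw : forall w : C, complex.Im w = 0 -> w = ((complex.Re w)%:C : C).
  by move=> [a b] /= ->.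
by rewrite (eqw e Ie) ltcR.
Qed.

Lemma cvg0_le (u : nat -> C) (v : nat -> R) :
  (forall n, `|u n| <= ((v n)%:C : C)) -> v @ \oo --> 0 -> u @ \oo --> 0.
Proof.
move=> hu /cvgC hv; apply/cvgrPdist_lt => e e0.
move/cvgrPdist_lt: hv => /(_ e e0); apply: filterS => n.
rewrite !sub0r !normrN => h; apply: le_lt_trans (hu n) _.
apply: le_lt_trans h; rewrite norm_realC lecR; exact: ler_norm.
Qed.

Lemma en_realC (x : R) n : en (x%:C : C) n = ((en x n)%:C : C).
Proof.
rewrite /en rmorph_sum; apply: eq_bigr => i _.
by rewrite fmorph_div rmorphXn rmorph_nat.
Qed.

Lemma en_cvgR (x : R) : en x @ \oo --> expR x.
Proof.
have -> : en x = series (exp_coeff x).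
  by apply/funext => n; rewrite /en /series /= big_mkord.
exact: is_cvg_series_exp_coeff.
Qed.

Lemma limC (u : nat -> C) (a : C) : u @ \oo --> a -> lim (u @ \oo) = a.
Proof. move=> ha. apply: cvg_lim => //. Qed.

Lemma limC_eq (u v : nat -> C) (a a' : C) : u @ \oo --> a -> v @ \oo --> a' -> u = v -> a = a'.
Proof.
move=> ha hb uv; subst v.
by rewrite -(limC ha) -(limC hb).
Qed.

Definition nc (w : C) : R := Num.sqrt (complex.Re w ^+ 2 + complex.Im w ^+ 2).
Lemma normE (w : C) : `|w| = ((nc w)%:C : C).
Proof. exact: normc_def. Qed.
Lemma nc_ge0 (w : C) : 0 <= nc w.
Proof. exact: sqrtr_ge0. Qed.
Lemma ncX (w : C) i : nc (w ^+ i) = nc w ^+ i.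
Proof.
have h : ((nc (w ^+ i))%:C : C) = ((nc w ^+ i)%:C : C).
  by rewrite rmorphXn -normE normrX normE.
exact: (complexI h).
Qed.
Lemma Re_le (w : C) : `|complex.Re w| <= nc w.
Proof.
rewrite /nc -sqrtr_sqr ler_sqrt; first by rewrite lerDl sqr_ge0.
by rewrite addr_ge0 // sqr_ge0.
Qed.
Lemma Im_le (w : C) : `|complex.Im w| <= nc w.
Proof.
rewrite /nc -sqrtr_sqr ler_sqrt; first by rewrite addrC lerDl sqr_ge0.
by rewrite addr_ge0 // sqr_ge0.
Qed.

Lemma en_split (z : C) n : en z n =
  ((\sum_(i < n) complex.Re (z ^+ i) / (i`!)%:R)%:C : C) +
  'i%C * ((\sum_(i < n) complex.Im (z ^+ i) / (i`!)%:R)%:C).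
Proof.
rewrite /en !rmorph_sum mulr_sumr -big_split; apply: eq_bigr => i _ /=.
rewrite !fmorph_div !rmorph_nat; set w := z ^+ i.
by rewrite {1}[w]complexE mulrDl -mulrA.
Qed.

Lemma ser_cvg (f : C -> R) (z : C) : (forall w, `|f w| <= nc w) ->
  cvgn (fun n => \sum_(i < n) f (z ^+ i) / (i`!)%:R).
Proof.
move=> hf.
have -> : (fun n => \sum_(i < n) f (z ^+ i) / (i`!)%:R) =
   series (fun i => f (z ^+ i) / (i`!)%:R).
  by apply/funext => n; rewrite /series /= big_mkord.
apply: (@normed_cvg _ R^o).
have : cvgn (series (fun i => `|f (z ^+ i) / (i`!)%:R|)); last by [].
apply: (@series_le_cvg _ _ (exp_coeff (nc z))).
- by move=> n; rewrite normr_ge0.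
- by move=> n; apply: exp_coeff_ge0; apply: nc_ge0.
- move=> i; rewrite /exp_coeff /= normf_div normr_nat -ncX.
  by apply: ler_wpM2r; rewrite ?invr_ge0 ?ler0n // hf.
- exact: is_cvg_series_exp_coeff.
Qed.

Lemma en_cvgC (z : C) : exists l : C, en z @ \oo --> l.
Proof.
have h1 := ser_cvg (z:=z) Re_le; have h2 := ser_cvg (z:=z) Im_le.
eexists; have -> : en z = fun n => _ := funext (en_split z).
apply: cvgD; first exact: cvgC h1.
apply: cvgMl_tmp; exact: cvgC h2.
Qed.

Definition E (z : C) : C := lim (en z @ \oo).
Lemma E_cvg z : en z @ \oo --> E z.
Proof. by have [l hl] := en_cvgC z; rewrite /E (limC hl). Qed.

Lemma rn_realC (x y : R) n : rn (x%:C : C) (y%:C) n = ((rn x y n)%:C : C).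
Proof. by rewrite !rnE -rmorphD !en_realC -rmorphM -rmorphB. Qed.

Lemma E_mulN z : E z * E (- z) = 1.
Proof.
have h1 : (fun n => en z n * en (- z) n) @ \oo --> E z * E (- z).
  by apply: cvgM; apply: E_cvg.
apply: (limC_eq h1 _ (erefl _)).
have -> : (fun n => en z n * en (- z) n) = (fun n => en 0 n + rn z (- z) n).
  by apply/funext => n; rewrite en_mul subrr.
rewrite -[1]addr0; apply: cvgD.
  apply: cvg_near_cst; exists 1%N => // n /= hn.
  by rewrite -(prednK hn) en0.
apply: (@cvg0_le _ (fun n => rn (nc z) (nc z) n)).
  move=> n; apply: le_trans (rn_norm _ _ _) _.
  by rewrite normrN normE rn_realC.
have -> : (fun n => rn (nc z) (nc z) n) =
   (fun n => en (nc z) n * en (nc z) n - en (nc z + nc z) n).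
  by apply/funext => n; rewrite rnE.
have h := cvgB (cvgM (en_cvgR (x:=nc z)) (en_cvgR (x:=nc z))) (en_cvgR (x:=nc z + nc z)).
rewrite expRD subrr in h.
exact: h.
Qed.

Lemma cvg_shift (u : nat -> C) (l : C) j : u @ \oo --> l ->
  (fun n => u (n - j)%N) @ \oo --> l.
Proof.
move/cvgrPdist_lt => H; apply/cvgrPdist_lt => e e0.
have [N0 _ HN] := H e e0.
exists (N0 + j)%N => // n /= hn; apply: HN => /=.
move: hn; lia.
Qed.

End ScalarExp.

Lemma sum_ext_zero (K : numFieldType) n1 n2 (F : nat -> K) : (n1 <= n2)%N ->
  (forall j, (n1 <= j)%N -> F j = 0) ->
  \sum_(j < n2) F j = \sum_(j < n1) F j.
Proof.
move=> h H.
rewrite -(big_mkord xpredT F) -(big_mkord xpredT F) (big_cat_nat (leq0n _) h) /=.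
rewrite [X in _ + X = _]big1_seq ?addr0 // => j /andP[_].
by rewrite mem_index_iota => /andP[hj _]; apply: H.
Qed.

Lemma pascal (K : numFieldType) (s : K) (v : nat -> K) k :
  \sum_(j < k.+2) ('C(k.+1, j))%:R * s ^+ (k.+1 - j) * v j =
  (\sum_(j < k.+1) ('C(k, j))%:R * s ^+ (k - j) * v j) * s +
  \sum_(j < k.+1) ('C(k, j))%:R * s ^+ (k - j) * v j.+1.
Proof.
rewrite big_ord_recl /= bin0 subn0.
under eq_bigr do rewrite /bump /= add1n binS natrD subSS mulrDl mulrDl.
rewrite big_split /= addrA; congr (_ + _).
rewrite mulr_suml [in RHS]big_ord_recl /= bin0 subn0.
congr (_ + _); first by rewrite exprSr; ring.
rewrite big_ord_recr /= bin_small // mul0r mul0r addr0.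
apply: eq_bigr => j _; rewrite /bump /= add1n.
have hj : (k - j = (k - j.+1).+1)%N by move: (ltn_ord j); lia.
by rewrite hj exprSr; ring.
Qed.

Lemma fact_sum (K : numFieldType) (s : K) j n :
  \sum_(k < n) ('C(k, j))%:R * s ^+ (k - j) / (k`!)%:R = (j`!)%:R^-1 * en s (n - j).
Proof.
have [nj|jn] := leqP n j.
  have -> : (n - j = 0)%N by apply/eqP; rewrite subn_eq0.
  rewrite /en big_ord0 mulr0 big1 // => k _.
  by rewrite bin_small ?mul0r // (leq_trans (ltn_ord k) nj).
rewrite -(big_mkord xpredT (fun k => ('C(k, j))%:R * s ^+ (k - j) / (k`!)%:R)).
rewrite (big_cat_nat (leq0n j) (ltnW jn)) /=.
rewrite big_nat_cond big1 ?add0r; last first.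
  by move=> k /andP[/andP[_ hk] _]; rewrite bin_small ?mul0r.
have := big_addn 0 n j xpredT (fun k => ('C(k, j))%:R * s ^+ (k - j) / (k`!)%:R).
rewrite add0n => ->.
rewrite /en big_mkord mulr_sumr; apply: eq_bigr => i _.
rewrite addnK.
have hb := bin_fact (leq_addl i j).
rewrite addnK in hb.
have h1 := fact_neq0 K i; have h2 := fact_neq0 K j.
have h3 : (('C(i + j, j))%:R : K) != 0 by rewrite pnatr_eq0 -lt0n bin_gt0 leq_addl.
rewrite -hb !natrM.
field.
by rewrite h1 h2 h3.
Qed.

Section MExp.
Variables (R : realType) (D : nat).
Local Notation C := (Cx R).
Local Notation sm := (smat R D).
Implicit Types (b c d e : mi D).

Lemma bsum_eqf N (F G : mi D -> C) : (forall d, F d = G d) -> bsum N F = bsum N G.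
Proof. by move=> H; apply: bsum_ext => d _; apply: H. Qed.

Definition umul (X Y : sm) : sm := fun b c => bsum (mdeg c) (fun d => X b d * Y d c).
Definition BU (X : sm) := forall b c, (mdeg c < mdeg b)%N -> X b c = 0.
Definition SU (X : sm) := forall b c, (mdeg c <= mdeg b)%N -> X b c = 0.
Fixpoint npow (N : sm) (j : nat) : sm :=
  if j is j'.+1 then umul (npow N j') N else sone R D.

Lemma mmul_umul (X Y : sm) : BU Y -> mmul X Y = umul X Y.
Proof.
move=> hY; apply/funext => b; apply/funext => c.
by rewrite /mmul (@bsum_lim _ _ (mdeg c)) // => d hd; rewrite hY ?mulr0.
Qed.

Lemma npow_SU (N : sm) : SU N -> forall j b c, (mdeg c < mdeg b + j)%N -> npow N j b c = 0.
Proof.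
move=> hN; elim=> [|j IH] b c /=.
  rewrite addn0 /sone => h; case: eqP => [bc|]; last by [].
  by move: h; rewrite bc ltnn.
move=> h; apply: bsum_eq0 => d dc.
have [db|bd] := ltnP (mdeg d) (mdeg b + j).
  by rewrite IH ?mul0r.
rewrite hN ?mulr0 //; move: h bd; lia.
Qed.

Lemma BU_npow (N : sm) j : SU N -> BU (npow N j).
Proof.
move=> hN b c h; apply: npow_SU => //; exact: (leq_trans h (leq_addr _ _)).
Qed.

Lemma umul_1r (X : sm) : umul X (sone R D) = X.
Proof.
apply/funext => b; apply/funext => c.
by rewrite /umul /sone bsum_deltar.
Qed.

Lemma umulA (X Y Z : sm) : BU Y -> umul (umul X Y) Z = umul X (umul Y Z).
Proof.
move=> hY; apply/funext => b; apply/funext => c; rewrite /umul.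
transitivity (bsum (mdeg c) (fun e => bsum (mdeg c) (fun d => X b d * Y d e * Z e c))).
  apply: bsum_ext => e ec; rewrite -bsumZr; symmetry.
  by apply: bsum_supp => // d hd; rewrite hY ?mulr0 ?mul0r.
rewrite bsum_exch; apply: bsum_eqf => d; rewrite -bsumZ.
by apply: bsum_eqf => e; rewrite mulrA.
Qed.

Lemma npow_add (N : sm) i j : SU N -> npow N (i + j) = umul (npow N i) (npow N j).
Proof.
move=> hN; elim: j => [|j IH]; first by rewrite addn0 /= umul_1r.
by rewrite addnS /= IH umulA //; apply: BU_npow.
Qed.

Lemma npow_opp (N : sm) j :
  npow (fun b c => - N b c) j = fun b c => (-1) ^+ j * npow N j b c.
Proof.
elim: j => [|j IH] /=.
  by apply/funext => b; apply/funext => c; rewrite expr0 mul1r.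
rewrite IH; apply/funext => b; apply/funext => c; rewrite /umul -bsumZ.
by apply: bsum_eqf => d; rewrite exprS; ring.
Qed.

Section Bform.
Variables (B N : sm) (s : C).
Hypothesis hB : forall b c, B b c = s * (b == c)%:R + N b c.
Hypothesis hN : SU N.

Lemma BU_B : BU B.
Proof.
move=> b c h; rewrite hB hN ?(ltnW h) // addr0.
case: eqP => [bc|]; last by rewrite mulr0.
by move: h; rewrite bc ltnn.
Qed.

Lemma mpowE k b c :
  mpow B k b c = \sum_(j < k.+1) ('C(k, j))%:R * s ^+ (k - j) * npow N j b c.
Proof.
elim: k b c => [|k IH] b c.
  by rewrite big_ord1 /= mul1r expr0 mul1r.
rewrite /= (mmul_umul _ BU_B) /umul.
rewrite (pascal s (fun j => npow N j b c)).
under bsum_eqf do rewrite hB mulrDr.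
rewrite bsumD; congr (_ + _).
  under bsum_eqf do rewrite mulrA.
  by rewrite bsum_deltar // IH.
under bsum_eqf do rewrite IH mulr_suml.
rewrite bsum_sum; apply: eq_bigr => j _ /=; rewrite /umul -bsumZ.
by apply: bsum_eqf => d; rewrite mulrA.
Qed.

Definition Qm (M : sm) : sm := fun b c =>
  \sum_(j < (mdeg c).+1) npow M j b c / (j`!)%:R.

Lemma psumE b c n :
  \sum_(k < n) mpow B k b c / (k`!)%:R =
  \sum_(j < (mdeg c).+1) npow N j b c / (j`!)%:R * en s (n - j).
Proof.
set m := mdeg c.
transitivity (\sum_(k < n) \sum_(j < m.+1)
    npow N j b c * (('C(k, j))%:R * s ^+ (k - j) / (k`!)%:R)).
  apply: eq_bigr => k _; rewrite mpowE.
  transitivity (\sum_(j < k.+1) ('C(k, j))%:R * s ^+ (k - j) * npow N j b c / (k`!)%:R).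
    by rewrite mulr_suml.
  rewrite -(@sum_ext_zero _ k.+1 (k + m).+1 (fun j => ('C(k, j))%:R * s ^+ (k - j) * npow N j b c / (k`!)%:R)); last first.
  - by move=> j hj; rewrite bin_small ?mul0r ?mul0r.
  - by rewrite ltnS leq_addr.
  rewrite -(@sum_ext_zero _ m.+1 (k + m).+1 (fun j => npow N j b c * (('C(k, j))%:R * s ^+ (k - j) / (k`!)%:R))); last first.
  - by move=> j hj; rewrite npow_SU ?mul0r // (leq_trans hj) // leq_addl.
  - by rewrite ltnS leq_addl.
  by apply: eq_bigr => j _; ring.
rewrite exchange_big /=; apply: eq_bigr => j _.
by rewrite -mulr_sumr fact_sum mulrA.
Qed.

Lemma mexpE b c : mexp B b c = E s * Qm N b c.
Proof.
rewrite /mexp.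
have -> : (fun n => \sum_(k < n) mpow B k b c / (k`!)%:R) =
   (fun n => \sum_(j < (mdeg c).+1) npow N j b c / (j`!)%:R * en s (n - j)).
  by apply/funext => n; rewrite psumE.
have hc : (fun n => \sum_(j < (mdeg c).+1) npow N j b c / (j`!)%:R * en s (n - j)) @ \oo -->
   \sum_(j < (mdeg c).+1) npow N j b c / (j`!)%:R * E s.
  apply: my_cvg_big => j _; apply: cvgMl_tmp; apply: cvg_shift; exact: E_cvg.
rewrite (limC hc) /Qm mulr_sumr; apply: eq_bigr => j _; by rewrite mulrC.
Qed.

End Bform.

Lemma Qm_BU (M : sm) : SU M -> BU (Qm M).
Proof.
move=> hM b c h; rewrite /Qm big1 // => j _; rewrite npow_SU ?mul0r //.
exact: (leq_trans h (leq_addr _ _)).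
Qed.

Lemma QQ (N : sm) : SU N -> forall b c,
  bsum (mdeg c) (fun e => Qm (fun b c => - N b c) b e * Qm N e c) = (b == c)%:R.
Proof.
move=> hN b c; set m := mdeg c.
pose F i j := ((-1) ^+ i / (i`!)%:R) * (1 ^+ j / (j`!)%:R) * npow N (i + j) b c.
transitivity (\sum_(i < m.+1) \sum_(j < m.+1) F i j).
  transitivity (bsum m (fun e => \sum_(i < m.+1) \sum_(j < m.+1)
     ((-1) ^+ i / (i`!)%:R) * (1 ^+ j / (j`!)%:R) * (npow N i b e * npow N j e c))).
    apply: bsum_ext => e em.
    have -> : Qm (fun b c => - N b c) b e =
       \sum_(i < (mdeg e).+1) (-1) ^+ i * npow N i b e / (i`!)%:R.
      by rewrite /Qm; apply: eq_bigr => i _; rewrite npow_opp.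
    rewrite mulr_suml.
    rewrite -(@sum_ext_zero _ (mdeg e).+1 m.+1 (fun i => (-1) ^+ i * npow N i b e / (i`!)%:R * Qm N e c)); last first.
    - move=> i hi; rewrite npow_SU ?mulr0 ?mul0r //.
      exact: (leq_trans hi (leq_addl _ _)).
    - by rewrite ltnS.
    apply: eq_bigr => i _; rewrite /Qm mulr_sumr; apply: eq_bigr => j _.
    by rewrite expr1n; field; rewrite !fact_neq0.
  rewrite bsum_sum; apply: eq_bigr => i _; rewrite bsum_sum; apply: eq_bigr => j _.
  rewrite /F.
  rewrite bsumZ.
  rewrite (npow_add i j hN).
  by [].
transitivity (\sum_(i < m.+1) \sum_(j < m.+1 | (i + j < m.+1)%N) F i j).
  apply: eq_bigr => i _; rewrite [RHS]big_mkcond /=; apply: eq_bigr => j _.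
  case: ifP => // h; rewrite /F npow_SU ?mulr0 //.
  move/negbT: h; rewrite -leqNgt => h; exact: (leq_trans h (leq_addl _ _)).
rewrite (triangle m.+1 F).
rewrite big_ord_recl /= [X in _ + X = _]big1 ?addr0; last first.
  move=> s _; rewrite /bump /= add1n.
  transitivity (\sum_(i < s.+2) ((-1) ^+ i / (i`!)%:R * (1 ^+ (s.+1 - i) / ((s.+1 - i)`!)%:R)) * npow N s.+1 b c).
    apply: eq_bigr => i _; rewrite /F subnKC //; by rewrite -ltnS.
  by rewrite -mulr_suml binom_fact addNr expr0n /= mul0r mul0r.
rewrite big_ord1 /F /= fact0 mulr1n !expr0 divr1 !mul1r.
by [].
Qed.

End MExp.

Section TLam.
Variables (R : realType) (D : nat).
Local Notation C := (Cx R).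
Local Notation sm := (smat R D).

Definition a0 : mi D := [ffun _ => 0%N].
Lemma mdeg_madd (b a : mi D) : mdeg (madd b a) = (mdeg b + mdeg a)%N.
Proof. by rewrite /mdeg -big_split; apply: eq_bigr => i _; rewrite ffunE. Qed.
Lemma mdeg_a0 : mdeg a0 = 0%N.
Proof. by rewrite /mdeg big1 // => i _; rewrite ffunE. Qed.
Lemma madd_a0 (b : mi D) : madd b a0 = b.
Proof. by apply/ffunP => i; rewrite !ffunE addn0. Qed.
Lemma mdeg0 (a : mi D) : mdeg a = 0%N -> a = a0.
Proof.
move=> h; apply/ffunP => i; rewrite ffunE; apply/eqP.
by have := le_mdeg a i; rewrite h leqn0.
Qed.

Lemma tLam_diag (t : mi D -> C) (b c : mi D) : (mdeg c <= mdeg b)%N ->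
  tLam t b c = t a0 * (b == c)%:R.
Proof.
move=> cb; rewrite /tLam (@bsum_lim _ _ (mdeg c)); last first.
  move=> a ha; rewrite /Lam; case: eqP => [h|]; last by rewrite mulr0.
  by move: ha; rewrite -h mdeg_madd ltnNge leq_addl.
have h0 : (mdeg a0 <= mdeg c)%N by rewrite mdeg_a0.
rewrite -[RHS](bsum_delta (fun a => t a * (b == c)%:R) h0).
apply: bsum_ext => a _; have [->|na] := eqVneq a a0.
  by rewrite /Lam madd_a0 mul1r.
rewrite mul0r /Lam; case: eqP => [h|]; last by rewrite mulr0.
have : mdeg a != 0%N by apply: contra na => /eqP /mdeg0 ->.
by move: cb; rewrite -h mdeg_madd; lia.
Qed.

Definition NA (t : mi D -> C) : sm := fun b c => tLam t b c - t a0 * (b == c)%:R.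

Lemma SU_NA (t : mi D -> C) : SU (NA t).
Proof. by move=> b c h; rewrite /NA tLam_diag // subrr. Qed.

Lemma W0E (t : mi D -> C) b c : W0 t b c = E (t a0) * Qm (NA t) b c.
Proof.
apply: (mexpE (N := NA t)); last exact: SU_NA.
by move=> b' c'; rewrite /NA addrC subrK.
Qed.

Lemma W0invE (t : mi D -> C) b c : W0inv t b c = E (- t a0) * Qm (fun b c => - NA t b c) b c.
Proof.
apply: (mexpE (N := fun b c => - NA t b c)).
  by move=> b' c'; rewrite /mopp /NA; ring.
by move=> b' c' h; rewrite SU_NA ?oppr0.
Qed.

Lemma Wfacts (t : mi D -> C) :
  (forall f e, (mdeg e < mdeg f)%N -> W0inv t f e = 0) /\
  (forall f e, (mdeg e < mdeg f)%N -> W0 t f e = 0) /\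
  (forall b c, bsum (mdeg c) (fun e => W0inv t b e * W0 t e c) = (b == c)%:R).
Proof.
split; [|split].
- move=> f e h; rewrite W0invE Qm_BU ?mulr0 //.
  by move=> b c h' /=; rewrite SU_NA ?oppr0.
- move=> f e h; rewrite W0E Qm_BU ?mulr0 //; exact: SU_NA.
move=> b c.
have hE : E (- t a0) * E (t a0) = 1 by rewrite -{2}(opprK (t a0)) E_mulN.
rewrite -(QQ (SU_NA t) b c) -[RHS]mul1r -hE -bsumZ.
apply: bsum_ext => e _; rewrite W0invE W0E; ring.
Qed.

End TLam.

Theorem mainTheorem9 (R : realType) (D : nat) (t1 t2 : mi D -> Cx R)
    (G WG Gt S1 S2 S1inv S2inv H Z1 Z2 : smat R D) :
  mmul_to (W0 t1) G WG ->
  mmul_to WG (mtr (W0inv t2)) Gt ->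
  block_lower_unitri S1 -> block_lower_unitri S2 ->
  block_lower S1inv -> mmul_to S1 S1inv (sone R D) -> mmul_to S1inv S1 (sone R D) ->
  block_lower S2inv -> mmul_to S2 S2inv (sone R D) -> mmul_to S2inv S2 (sone R D) ->
  block_diag_invertible H ->
  Gt = mmul (mmul S1inv H) (mtr S2inv) ->
  (exists L, mmul_to Z1 (W0inv t1) L /\ block_strictly_lower L) ->
  (exists U, mmul_to Z2 (mtr (W0inv t2)) U /\ block_upper U) ->
  mmul_to Z1 G Z2 ->
  Z1 = szero R D /\ Z2 = szero R D.
Proof.
have [Vup [Wup VW]] := Wfacts t1.
exact: (core Vup Wup VW).
Qed.
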